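(* For every integer $n\ge1$, the Wang shift $\Omega_n$ is aperiodic, i.e., $\Omega_n$ is nonempty and no configuration $x\in\Omega_n$ satisfies $\sigma^{\mathbf k}(x)=x$ for a nonzero vector $\mathbf k\in\mathbb{Z}^2$.
   Context: Fix an integer $n\ge1$. Let $V_n=\{(v_0,v_1,v_2)\in\mathbb{Z}^3: 0\le v_0\le v_1\le 1,\ v_1\le v_2\le n+1\}$; write $(v_0,v_1,v_2)$ as the word $v_0v_1v_2$. A Wang tile is a quadruple $t=(a,b,c,d)$ of labels with $\mathrm{RIGHT}(t)=a$, $\mathrm{TOP}(t)=b$, $\mathrm{LEFT}(t)=c$, $\mathrm{BOTTOM}(t)=d$. For $t=(a,b,c,d)$ let $\hat t=(b,a,d,c)$ and $\hat S=\{\hat t: t\in S\}$. Define (tiles written as (right, top, left, bottom)): $W_n=\{(11(i+1),11(j+1),11i,11j):1\le i,j\le n\}$; $b_n^i=(00(i+1),111,00i,11n)$, $B_n=\{b_n^i:0\le i\le n-1\}$; $g_n^i=(01(i+1),111,00i,11(n+1))$, $G_n=\{g_n^i:0\le i\le n\}$; $y_n^i=(01(i+1),112,01i,11(n+1))$, $Y_n=\{y_n^i:1\le i\le n\}$; junction tiles $j_n^{k,l,r,s}=((0,k,l),(0,r,s),(0,s,r+n),(0,l,k+n))$ for $(k,l),(r,s)\in\{(0,0),(0,1),(1,1)\}$; $J_n$ is the set of these 9 tiles minus $j_n^{0,0,1,1}$ and $j_n^{1,1,0,0}$. $\mathcal{T}_n=W_n\cup B_n\cup G_n\cup Y_n\cup\hat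 B_n\cup\hat G_n\cup\hat Y_n\cup J_n$. A configuration $x:\mathbb{Z}^2\to\mathcal{T}_n$ is valid if $\mathrm{RIGHT}(x(\mathbf m))=\mathrm{LEFT}(x(\mathbf m+\mathbf e_1))$ and $\mathrm{TOP}(x(\mathbf m))=\mathrm{BOTTOM}(x(\mathbf m+\mathbf e_2))$ for all $\mathbf m$; $\Omega_n$ is the set of valid configurations, with shift $(\sigma^{\mathbf k}x)_{\mathbf m}=x_{\mathbf m+\mathbf k}$. *)

(* Defs.v *)
From Stdlib Require Import ZArith.
Open Scope Z_scope.

Definition label := (Z * Z * Z)%type.
Definition lab (a b c : Z) : label := (a, b, c).

Definition in_V (n : Z) (v : label) : Prop :=
  let '(v0, v1, v2) := v in 0 <= v0 <= v1 /\ v1 <= 1 /\ v1 <= v2 <= n + 1.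

Definition tile := (label * label * label * label)%type.
Definition mk_tile (a b c d : label) : tile := (a, b, c, d).
Definition RIGHT (t : tile) : label := let '(a, _, _, _) := t in a.
Definition TOP (t : tile) : label := let '(_, b, _, _) := t in b.
Definition LEFT (t : tile) : label := let '(_, _, c, _) := t in c.
Definition BOTTOM (t : tile) : label := let '(_, _, _, d) := t in d.

Definition hat (t : tile) : tile := let '(a, b, c, d) := t in (b, a, d, c).

Definition in_W (n : Z) (t : tile) : Prop :=
  exists i j, 1 <= i <= n /\ 1 <= j <= n /\
    t = mk_tile (lab 1 1 (i+1)) (lab 1 1 (j+1)) (lab 1 1 i) (lab 1 1 j).

Definition in_B (n : Z) (t : tile) : Prop :=
  exists i, 0 <= i <= n - 1 /\
    t = mk_tile (lab 0 0 (i+1)) (lab 1 1 1) (lab 0 0 i) (lab 1 1 n).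

Definition in_G (n : Z) (t : tile) : Prop :=
  exists i, 0 <= i <= n /\
    t = mk_tile (lab 0 1 (i+1)) (lab 1 1 1) (lab 0 0 i) (lab 1 1 (n+1)).

Definition in_Y (n : Z) (t : tile) : Prop :=
  exists i, 1 <= i <= n /\
    t = mk_tile (lab 0 1 (i+1)) (lab 1 1 2) (lab 0 1 i) (lab 1 1 (n+1)).

Definition in_hat (S : tile -> Prop) (t : tile) : Prop :=
  exists s, S s /\ t = hat s.

Definition kl_ok (k l : Z) : Prop :=
  (k = 0 /\ l = 0) \/ (k = 0 /\ l = 1) \/ (k = 1 /\ l = 1).

Definition junction (n k l r s : Z) : tile :=
  mk_tile (lab 0 k l) (lab 0 r s) (lab 0 s (r + n)) (lab 0 l (k + n)).

Definition in_J (n : Z) (t : tile) : Prop :=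
  exists k l r s, kl_ok k l /\ kl_ok r s /\
    ~ (k = 0 /\ l = 0 /\ r = 1 /\ s = 1) /\
    ~ (k = 1 /\ l = 1 /\ r = 0 /\ s = 0) /\
    t = junction n k l r s.

Definition in_T (n : Z) (t : tile) : Prop :=
  in_W n t \/ in_B n t \/ in_G n t \/ in_Y n t \/
  in_hat (in_B n) t \/ in_hat (in_G n) t \/ in_hat (in_Y n) t \/ in_J n t.

Definition config := (Z * Z) -> tile.

Definition valid (n : Z) (x : config) : Prop :=
  (forall m, in_T n (x m)) /\
  (forall m1 m2, RIGHT (x (m1, m2)) = LEFT (x (m1 + 1, m2)) /\
                 TOP (x (m1, m2)) = BOTTOM (x (m1, m2 + 1))).

Definition shift (k : Z * Z) (x : config) : config :=
  fun m => x (fst m + fst k, snd m + snd k).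

Definition aperiodic (n : Z) : Prop :=
  (exists x, valid n x) /\
  (forall x k, valid n x -> k <> (0, 0) -> shift k x <> x).

(* Main.v *)
Require Import Defs.
From Stdlib Require Import ZArith Lia Classical Wf_nat List IndefiniteDescription Cantor.
Import ListNotations.
Open Scope Z_scope.

Definition v0 (L : label) : Z := fst (fst L).
Definition v1 (L : label) : Z := snd (fst L).
Definition v2 (L : label) : Z := snd L.

Definition Wt (n i j : Z) : tile :=
  mk_tile (lab 1 1 (i+1)) (lab 1 1 (j+1)) (lab 1 1 i) (lab 1 1 j).
Definition St (n a b i : Z) : tile :=
  mk_tile (lab 0 b (i+1)) (lab 1 1 (1+a)) (lab 0 a i) (lab 1 1 (n+b)).

Definition TL (n : Z) (t : tile) : Prop :=
  (exists i j, 1 <= i <= n /\ 1 <= j <= n /\ t = Wt n i j) \/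
  (exists a b i, 0 <= a <= 1 /\ 0 <= b <= 1 /\ a <= i <= n - 1 + b /\
      (t = St n a b i \/ t = hat (St n a b i))) \/
  (exists k l r s, 0 <= k <= l /\ l <= 1 /\ 0 <= r <= s /\ s <= 1 /\ t = junction n k l r s).

Ltac simp := cbv beta iota delta [v0 v1 v2 RIGHT LEFT TOP BOTTOM St Wt junction mk_tile lab hat fst snd] in *.
Lemma pe {A B : Type} (a c : A) (b d : B) : (a, b) = (c, d) -> a = c /\ b = d.
Proof. intro H. inversion H. auto. Qed.
Ltac inj := repeat match goal with | H : (_, _) = (_, _) |- _ => apply pe in H; destruct H end.
Ltac fin := simp; inj; lia.
Ltac teq := unfold St, Wt, junction, mk_tile, lab, hat; repeat f_equal; lia.

Lemma kl_ok_iff k l : kl_ok k l <-> 0 <= k <= l /\ l <= 1 /\ (k = 0 \/ k = 1) /\ (l = 0 \/ l = 1).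
Proof. unfold kl_ok; split; intros; lia. Qed.

Lemma in_T_TL n t : in_T n t -> TL n t.
Proof.
  unfold in_T, TL; intros [H|[H|[H|[H|[H|[H|[H|H]]]]]]].
  - left. destruct H as (i&j&?&?&->). exists i, j. auto.
  - right; left. destruct H as (i&?&->). exists 0, 0, i. repeat split; try lia. left. teq.
  - right; left. destruct H as (i&?&->). exists 0, 1, i. repeat split; try lia. left. teq.
  - right; left. destruct H as (i&?&->). exists 1, 1, i. repeat split; try lia. left. teq.
  - right; left. destruct H as [s [[i [Hi Hs]] Ht]]; subst. exists 0, 0, i. repeat split; try lia. right. teq.
  - right; left. destruct H as [s [[i [Hi Hs]] Ht]]; subst. exists 0, 1, i. repeat split; try lia. right. teq.
  - right; left. destruct H as [s [[i [Hi Hs]] Ht]]; subst. exists 1, 1, i. repeat split; try lia. right. teq.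
  - right; right. destruct H as (k&l&r&s&H1&H2&_&_&->). apply kl_ok_iff in H1. apply kl_ok_iff in H2.
    exists k, l, r, s. repeat split; lia.
Qed.

Lemma hat_hat t : hat (hat t) = t.
Proof. destruct t as [[[a b] c] d]. reflexivity. Qed.

Lemma TL_hat n t : TL n t -> TL n (hat t).
Proof.
  unfold TL; intros [H|[H|H]].
  - left. destruct H as (i&j&?&?&->). exists j, i. auto.
  - right; left. destruct H as (a&b&i&?&?&?&Ht); destruct Ht as [Ht|Ht]; subst t; exists a, b, i; repeat split; try lia.
    + right; reflexivity.
    + left; rewrite hat_hat; reflexivity.
  - right; right. destruct H as (k&l&r&s&?&?&?&?&->). exists r, s, k, l. repeat split; try lia.
Qed.

Lemma RIGHT_hat t : RIGHT (hat t) = TOP t. Proof. destruct t as [[[a b] c] d]; reflexivity. Qed.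
Lemma TOP_hat t : TOP (hat t) = RIGHT t. Proof. destruct t as [[[a b] c] d]; reflexivity. Qed.
Lemma LEFT_hat t : LEFT (hat t) = BOTTOM t. Proof. destruct t as [[[a b] c] d]; reflexivity. Qed.
Lemma BOTTOM_hat t : BOTTOM (hat t) = LEFT t. Proof. destruct t as [[[a b] c] d]; reflexivity. Qed.

(* Classification of tiles by row type (v0 of horizontal labels) and column type *)
Lemma TL_v0 n t : TL n t ->
  v0 (RIGHT t) = v0 (LEFT t) /\ v0 (TOP t) = v0 (BOTTOM t) /\
  (v0 (LEFT t) = 0 \/ v0 (LEFT t) = 1) /\ (v0 (TOP t) = 0 \/ v0 (TOP t) = 1).
Proof.
  unfold TL; intros [H|[H|H]].
  - destruct H as (i&j&?&?&->). simp. lia.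
  - destruct H as (a&b&i&?&?&?&Ht); destruct Ht as [Ht|Ht]; subst t; cbn; lia.
  - destruct H as (k&l&r&s&?&?&?&?&->). simp. lia.
Qed.

Lemma TL_col1 n t : TL n t -> v0 (TOP t) = 1 -> v2 (RIGHT t) = v2 (LEFT t) + 1.
Proof.
  unfold TL; intros [H|[H|H]] Hv.
  - destruct H as (i&j&?&?&->). simp. lia.
  - destruct H as (a&b&i&?&?&?&Ht); destruct Ht as [Ht|Ht]; subst t; simp; lia.
  - destruct H as (k&l&r&s&?&?&?&?&->). simp. lia.
Qed.

Lemma TL_bounds n t : 1 <= n -> TL n t ->
  0 <= v2 (RIGHT t) <= n + 1 /\ 0 <= v2 (LEFT t) <= n + 1 /\
  0 <= v2 (TOP t) <= n + 1 /\ 0 <= v2 (BOTTOM t) <= n + 1 /\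
  0 <= v1 (RIGHT t) <= 1 /\ 0 <= v1 (LEFT t) <= 1 /\ 0 <= v1 (TOP t) <= 1 /\ 0 <= v1 (BOTTOM t) <= 1.
Proof.
  intro Hn. unfold TL; intros [H|[H|H]].
  - destruct H as (i&j&?&?&->). simp. lia.
  - destruct H as (a&b&i&?&?&?&Ht); destruct Ht as [Ht|Ht]; subst t; simp; lia.
  - destruct H as (k&l&r&s&?&?&?&?&->). simp. lia.
Qed.

Lemma TL_J n t : TL n t -> v0 (LEFT t) = 0 -> v0 (TOP t) = 0 ->
  exists k l r s, 0 <= k <= l /\ l <= 1 /\ 0 <= r <= s /\ s <= 1 /\ t = junction n k l r s.
Proof.
  unfold TL; intros [H|[H|H]] H1 H2.
  - destruct H as (i&j&?&?&->). simp. lia.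
  - destruct H as (a&b&i&?&?&?&Ht); destruct Ht as [Ht|Ht]; subst t; simp; lia.
  - exact H.
Qed.

Lemma TL_S n t : TL n t -> v0 (LEFT t) = 0 -> v0 (TOP t) = 1 ->
  exists a b i, 0 <= a <= 1 /\ 0 <= b <= 1 /\ a <= i <= n - 1 + b /\ t = St n a b i.
Proof.
  unfold TL; intros [H|[H|H]] H1 H2.
  - destruct H as (i&j&?&?&->). simp. lia.
  - destruct H as (a&b&i&?&?&?&Ht); destruct Ht as [Ht|Ht]; subst t; simp; try lia. exists a, b, i. auto.
  - destruct H as (k&l&r&s&?&?&?&?&->). simp. lia.
Qed.

Lemma TL_hS n t : TL n t -> v0 (LEFT t) = 1 -> v0 (TOP t) = 0 ->
  exists a b i, 0 <= a <= 1 /\ 0 <= b <= 1 /\ a <= i <= n - 1 + b /\ t = hat (St n a b i).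
Proof.
  intros H H1 H2. apply TL_hat in H. apply TL_S in H.
  - destruct H as (a&b&i&?&?&?&Ht). exists a, b, i. repeat split; try lia.
    rewrite <- Ht, hat_hat. reflexivity.
  - rewrite LEFT_hat. rewrite <- H2. destruct t as [[[? ?] ?] ?]; simp. apply TL_v0 in H. simp. lia.
  - rewrite TOP_hat. destruct t as [[[? ?] ?] ?]; simp. apply TL_v0 in H. simp. lia.
Qed.

Lemma TL_row1 n t : TL n t -> v0 (LEFT t) = 1 -> v2 (TOP t) = v2 (BOTTOM t) + 1.
Proof.
  intros H H1. pose proof (TL_v0 _ _ H) as Hv. apply TL_hat in H. apply TL_col1 in H.
  - rewrite RIGHT_hat, LEFT_hat in H. exact H.
  - rewrite TOP_hat. lia.
Qed.

Lemma TL_W n t : TL n t -> v0 (LEFT t) = 1 -> v0 (TOP t) = 1 ->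
  exists i j, 1 <= i <= n /\ 1 <= j <= n /\ t = Wt n i j.
Proof.
  unfold TL; intros [H|[H|H]] H1 H2.
  - exact H.
  - destruct H as (a&b&i&?&?&?&Ht); destruct Ht as [Ht|Ht]; subst t; simp; lia.
  - destruct H as (k&l&r&s&?&?&?&?&->). simp. lia.
Qed.

Definition validL (n : Z) (x : config) : Prop :=
  (forall m, TL n (x m)) /\
  (forall m1 m2, RIGHT (x (m1, m2)) = LEFT (x (m1 + 1, m2)) /\
                 TOP (x (m1, m2)) = BOTTOM (x (m1, m2 + 1))).

Lemma valid_validL n x : valid n x -> validL n x.
Proof. intros [H1 H2]. split; [intro m; apply in_T_TL; apply H1 | exact H2]. Qed.

Definition tr (x : config) : config := fun m => hat (x (snd m, fst m)).

Lemma tr_tr x m : tr (tr x) m = x m.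
Proof. unfold tr. destruct m. simpl. apply hat_hat. Qed.

Lemma validL_tr n x : validL n x -> validL n (tr x).
Proof.
  intros [H1 H2]. split.
  - intro m. unfold tr. apply TL_hat. apply H1.
  - intros m1 m2. unfold tr; simpl. rewrite RIGHT_hat, LEFT_hat, TOP_hat, BOTTOM_hat.
    destruct (H2 m2 m1) as [A B]. split; auto.
Qed.

Lemma Zconst (f : Z -> Z) : (forall j, f (j + 1) = f j) -> forall j, f j = f 0.
Proof.
  intros H j. destruct (Z_le_gt_dec 0 j) as [Hj|Hj].
  - pattern j; apply natlike_ind; auto. intros k Hk IH. rewrite <- IH. apply H.
  - assert (Hk : forall k, 0 <= k -> f (- k) = f 0).
    { intros k Hk; pattern k; apply natlike_ind; auto. intros k' Hk' IH. rewrite <- IH.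
      rewrite <- (H (- Z.succ k')). f_equal. lia. }
    replace j with (- (- j)) by lia. apply Hk. lia.
Qed.

Lemma Zind_both (P : Z -> Prop) : P 0 -> (forall j, P j -> P (j + 1)) -> (forall j, P j -> P (j - 1)) ->
  forall j, P j.
Proof.
  intros H0 Hu Hd j. destruct (Z_le_gt_dec 0 j) as [Hj|Hj].
  - pattern j; apply natlike_ind; auto. intros k _ IH. apply Hu in IH. exact IH.
  - assert (Hk : forall k, 0 <= k -> P (- k)).
    { intros k Hk; pattern k; apply natlike_ind; auto. intros k' _ IH. apply Hd in IH.
      replace (- Z.succ k') with (- k' - 1) by lia. exact IH. }
    replace j with (- (- j)) by lia. apply Hk. lia.
Qed.

Definition ct (x : config) (m : Z) : Z := v0 (TOP (x (m, 0))).
Definition rt (x : config) (j : Z) : Z := ct (tr x) j.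

Section Cfg.
Variable n : Z.
Hypothesis Hn : 1 <= n.
Variable x : config.
Hypothesis Hx : validL n x.

Lemma ct_const m j : v0 (TOP (x (m, j))) = ct x m.
Proof.
  unfold ct. apply (Zconst (fun j => v0 (TOP (x (m, j))))). intro k.
  destruct Hx as [H1 H2]. destruct (H2 m k) as [_ E]. rewrite E.
  destruct (TL_v0 _ _ (H1 (m, k + 1))) as (_&A&_). lia.
Qed.

Lemma ct_01 m : ct x m = 0 \/ ct x m = 1.
Proof. unfold ct. destruct (TL_v0 _ _ (proj1 Hx (m, 0))) as (_&_&_&A). exact A. Qed.

End Cfg.

Lemma rt_const n x (Hx : validL n x) m j : v0 (LEFT (x (m, j))) = rt x j.
Proof.
  unfold rt. rewrite <- (ct_const n (tr x) (validL_tr n x Hx) j m). unfold tr; simpl.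
  rewrite TOP_hat. destruct (TL_v0 _ _ (proj1 Hx (m, j))) as (A&_). lia.
Qed.

Lemma rt_01 n x (Hx : validL n x) j : rt x j = 0 \/ rt x j = 1.
Proof. unfold rt. apply (ct_01 n (tr x) (validL_tr n x Hx)). Qed.

Fixpoint sumZ (f : Z -> Z) (a : Z) (len : nat) : Z :=
  match len with O => 0 | S k => f a + sumZ f (a + 1) k end.

Lemma sumZ_last f a len : sumZ f a (S len) = sumZ f a len + f (a + Z.of_nat len).
Proof.
  revert a. induction len; intro a; simpl.
  - replace (a + 0) with a by lia. lia.
  - simpl in IHlen. rewrite IHlen. replace (a + 1 + Z.of_nat len) with (a + Z.pos (Pos.of_succ_nat len)) by lia. lia.
Qed.

Lemma sumZ_ext f g a len : (forall m, a <= m < a + Z.of_nat len -> f m = g m) -> sumZ f a len = sumZ g a len.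
Proof.
  revert a. induction len; intros a H; simpl; auto.
  rewrite H by lia. rewrite IHlen; auto. intros m Hm. apply H. lia.
Qed.

Lemma sumZ_bound f a len : (forall m, a <= m < a + Z.of_nat len -> 0 <= f m <= 1) ->
  0 <= sumZ f a len <= Z.of_nat len.
Proof.
  revert a. induction len; intros a H; simpl; [lia|].
  assert (A := H a ltac:(lia)). assert (B := IHlen (a+1) ltac:(intros; apply H; lia)). lia.
Qed.

Lemma sumZ_lin f g c a len : (forall m, a <= m < a + Z.of_nat len -> f m = g m + c) ->
  sumZ f a len = sumZ g a len + c * Z.of_nat len.
Proof.
  revert a. induction len; intros a H; simpl; [lia|].
  rewrite H by lia. rewrite IHlen by (intros; apply H; lia). lia.
Qed.

Lemma sumZ_tele u a len : sumZ (fun m => u (m + 1) - u m) a len = u (a + Z.of_nat len) - u a.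
Proof.
  revert a. induction len; intro a; simpl.
  - replace (a + 0) with a by lia. lia.
  - rewrite IHlen. replace (a + 1 + Z.of_nat len) with (a + Z.pos (Pos.of_succ_nat len)) by lia. lia.
Qed.

Lemma sumZ_minus f g a len : sumZ (fun m => f m - g m) a len = sumZ f a len - sumZ g a len.
Proof. revert a. induction len; intro a; simpl; [lia|]. rewrite IHlen. lia. Qed.

Section Cfg2.
Variable n : Z.
Hypothesis Hn : 1 <= n.
Variable x : config.
Hypothesis Hx : validL n x.

Lemma incr (j m1 : Z) (d : nat) :
  (forall m, m1 <= m < m1 + Z.of_nat d -> ct x m = 1) ->
  v2 (LEFT (x (m1 + Z.of_nat d, j))) = v2 (LEFT (x (m1, j))) + Z.of_nat d.
Proof.
  induction d; intro H.
  - simpl. replace (m1 + 0) with m1 by lia. lia.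
  - rewrite Nat2Z.inj_succ. replace (m1 + Z.succ (Z.of_nat d)) with ((m1 + Z.of_nat d) + 1) by lia.
    destruct Hx as [H1 H2]. rewrite <- (proj1 (H2 _ _)).
    rewrite (TL_col1 n _ (H1 _)).
    + rewrite IHd; [lia|]. intros; apply H; lia.
    + rewrite (ct_const n x Hx). apply H. lia.
Qed.

Lemma zero_window m : exists m', m <= m' <= m + n + 1 /\ ct x m' = 0.
Proof.
  destruct (classic (exists m', m <= m' <= m + n + 1 /\ ct x m' = 0)) as [H|H]; auto.
  exfalso.
  assert (A : forall m', m <= m' <= m + n + 1 -> ct x m' = 1).
  { intros m' Hm'. destruct (ct_01 n x Hx m'); auto. exfalso; apply H; eauto. }
  assert (B := incr 0 m (Z.to_nat (n + 1)) ltac:(intros; apply A; lia)).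
  rewrite Z2Nat.id in B by lia.
  destruct Hx as [H1 H2].
  assert (C := TL_col1 n _ (H1 (m + (n + 1), 0))).
  rewrite (ct_const n x Hx) in C. specialize (C (A (m + (n + 1)) ltac:(lia))).
  destruct (TL_bounds n _ Hn (H1 (m, 0))) as (_&D&_).
  destruct (TL_bounds n _ Hn (H1 (m + (n + 1), 0))) as (E&_).
  lia.
Qed.

End Cfg2.

Lemma sumZ_S f a k : sumZ f a (S k) = f a + sumZ f (a + 1) k.
Proof. reflexivity. Qed.

Section Dec.
Variable n : Z.
Hypothesis Hn : 1 <= n.
Variable x : config.
Hypothesis Hx : validL n x.

Lemma Jat m j : ct x m = 0 -> rt x j = 0 ->
  exists k l r s, 0 <= k <= l /\ l <= 1 /\ 0 <= r <= s /\ s <= 1 /\ x (m, j) = junction n k l r s.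
Proof.
  intros H1 H2. apply TL_J. apply (proj1 Hx). rewrite (rt_const n x Hx); auto. rewrite (ct_const n x Hx); auto.
Qed.

Lemma Sat m j : ct x m = 1 -> rt x j = 0 ->
  exists a b i, 0 <= a <= 1 /\ 0 <= b <= 1 /\ a <= i <= n - 1 + b /\ x (m, j) = St n a b i.
Proof.
  intros H1 H2. apply TL_S. apply (proj1 Hx). rewrite (rt_const n x Hx); auto. rewrite (ct_const n x Hx); auto.
Qed.

Lemma hSat m j : ct x m = 0 -> rt x j = 1 ->
  exists a b i, 0 <= a <= 1 /\ 0 <= b <= 1 /\ a <= i <= n - 1 + b /\ x (m, j) = hat (St n a b i).
Proof.
  intros H1 H2. apply TL_hS. apply (proj1 Hx). rewrite (rt_const n x Hx); auto. rewrite (ct_const n x Hx); auto.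
Qed.

Lemma Wat m j : ct x m = 1 -> rt x j = 1 ->
  exists i k, 1 <= i <= n /\ 1 <= k <= n /\ x (m, j) = Wt n i k.
Proof.
  intros H1 H2. apply TL_W. apply (proj1 Hx). rewrite (rt_const n x Hx); auto. rewrite (ct_const n x Hx); auto.
Qed.

Lemma adjH m j : RIGHT (x (m, j)) = LEFT (x (m + 1, j)).
Proof. apply (proj1 ((proj2 Hx) m j)). Qed.
Lemma adjV m j : TOP (x (m, j)) = BOTTOM (x (m, j + 1)).
Proof. apply (proj2 ((proj2 Hx) m j)). Qed.

Lemma allJ_row (H0 : forall m, ct x m = 0) j : rt x j = 0 ->
  n = 1 /\ forall m, v2 (RIGHT (x (m, j))) = 1 /\ v1 (TOP (x (m, j))) = 0.
Proof.
  intro Hj.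
  assert (K : forall m, v2 (RIGHT (x (m, j))) = v2 (LEFT (x (m+1, j))) ) by (intro; rewrite adjH; auto).
  assert (L : forall m, n = 1 /\ v2 (RIGHT (x (m, j))) = 1 /\ v1 (TOP (x (m + 1, j))) = 0).
  { intro m. destruct (Jat m j (H0 m) Hj) as (k&l&r&s&?&?&?&?&E1).
    destruct (Jat (m+1) j (H0 (m+1)) Hj) as (k'&l'&r'&s'&?&?&?&?&E2).
    specialize (K m). rewrite E1, E2 in K |- *. fin. }
  split; [apply (L 0)|]. intro m. split; [apply L|]. replace m with (m - 1 + 1) by lia. apply L.
Qed.

Lemma ct_has_one : exists m, ct x m = 1.
Proof.
  destruct (classic (exists m, ct x m = 1)) as [H|H]; auto. exfalso.
  assert (H0 : forall m, ct x m = 0) by (intro m; destruct (ct_01 n x Hx m); auto; exfalso; eauto).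
  destruct (zero_window n Hn (tr x) (validL_tr n x Hx) 0) as (j&_&Hj). fold (rt x j) in Hj.
  destruct (allJ_row H0 j Hj) as [Hn1 HJ].
  destruct (rt_01 n x Hx (j+1)) as [R1|R1].
  - destruct (Jat 0 (j+1) (H0 0) R1) as (k&l&r&s&?&?&?&?&E).
    assert (A := adjV 0 j). rewrite E in A. destruct (HJ 0) as [_ B].
    destruct (allJ_row H0 (j+1) R1) as [_ C]. destruct (C 0) as [C1 _]. rewrite E in C1.
    rewrite A in B. fin.
  - (* hats in row j+1: a = 0, then b = 0, i = 0 *)
    assert (Hat : forall m, exists a b i, 0 <= a <= 1 /\ 0 <= b <= 1 /\ a <= i <= n - 1 + b /\
                 x (m, j+1) = hat (St n a b i)) by (intro m; apply hSat; auto).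
    assert (Ha : forall m, v1 (BOTTOM (x (m, j+1))) = 0).
    { intro m. rewrite <- adjV. apply HJ. }
    assert (Hb : forall m, v2 (TOP (x (m, j+1))) = 1 /\ v1 (TOP (x (m, j+1))) = 0).
    { intro m. destruct (Hat m) as (a&b&i&?&?&?&E). destruct (Hat (m-1)) as (a'&b'&i'&?&?&?&E').
      assert (A1 := Ha m). assert (A2 := Ha (m-1)). assert (A3 := adjH (m-1) (j+1)).
      replace (m - 1 + 1) with m in A3 by lia. rewrite E, E' in *. fin. }
    destruct (rt_01 n x Hx (j+1+1)) as [R2|R2].
    + destruct (Jat 0 (j+1+1) (H0 0) R2) as (k&l&r&s&?&?&?&?&E).
      destruct (allJ_row H0 (j+1+1) R2) as [_ C]. destruct (C 0) as [C1 _].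
      assert (A := adjV 0 (j+1)). destruct (Hb 0) as [B1 B2]. rewrite E in *. rewrite A in B2. fin.
    + destruct (hSat 0 (j+1+1) (H0 0) R2) as (a&b&i&?&?&?&E).
      destruct (hSat 1 (j+1+1) (H0 1) R2) as (a'&b'&i'&?&?&?&E').
      assert (A := adjV 0 (j+1)). assert (A' := adjV 1 (j+1)). assert (A'' := adjH 0 (j+1+1)).
      destruct (Hb 0) as [B1 B2]. destruct (Hb 1) as [B1' B2']. replace (0+1) with 1 in A'' by lia.
      rewrite E, E' in *. rewrite A in B1, B2. rewrite A' in B1', B2'. fin.
Qed.

Definition consec (p p' : Z) := p < p' /\ ct x p = 0 /\ ct x p' = 0 /\ (forall m, p < m < p' -> ct x m = 1).

Lemma incr' j p p' : p < p' -> (forall m, p < m < p' -> ct x m = 1) ->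
  v2 (LEFT (x (p', j))) = v2 (RIGHT (x (p, j))) + (p' - p - 1).
Proof.
  intros H1 H2. rewrite adjH.
  assert (A := incr n x Hx j (p + 1) (Z.to_nat (p' - p - 1)) ltac:(intros; apply H2; lia)).
  rewrite Z2Nat.id in A by lia. replace (p + 1 + (p' - p - 1)) with p' in A by lia. exact A.
Qed.

End Dec.

Lemma gap n (Hn : 1 <= n) x (Hx : validL n x) p p' : consec x p p' -> p' - p - 1 = n - 1 \/ p' - p - 1 = n.
Proof.
  intros (H1&H2&H3&H4).
  destruct (zero_window n Hn (tr x) (validL_tr n x Hx) 0) as (j0&_&Hj0). fold (rt x j0) in Hj0.
  destruct (ct_has_one n Hn (tr x) (validL_tr n x Hx)) as (j1&Hj1). fold (rt x j1) in Hj1.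
  assert (A0 := incr' n x Hx j0 p p' H1 H4). assert (A1 := incr' n x Hx j1 p p' H1 H4).
  destruct (Jat n x Hx p j0 H2 Hj0) as (k&l&r&s&?&?&?&?&E1).
  destruct (Jat n x Hx p' j0 H3 Hj0) as (k'&l'&r'&s'&?&?&?&?&E2).
  destruct (hSat n x Hx p j1 H2 Hj1) as (a&b&i&?&?&?&E3).
  destruct (hSat n x Hx p' j1 H3 Hj1) as (a'&b'&i'&?&?&?&E4).
  rewrite E1, E2 in A0. rewrite E3, E4 in A1. simp. lia.
Qed.

Definition sigS (x : config) (j p p' : Z) : Z :=
  sumZ (fun m => 1 - v1 (LEFT (x (m, j)))) (p + 1) (Z.to_nat (p' - p - 1)).
Definition omg (x : config) (j p p' : Z) : Z :=
  sumZ (fun m => 1 - v1 (RIGHT (x (m, j)))) (p + 1) (Z.to_nat (p' - p - 1)).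

Section Strip.
Variable n : Z.
Hypothesis Hn : 1 <= n.
Variable x : config.
Hypothesis Hx : validL n x.

Lemma strip_facts j p p' : rt x j = 0 -> consec x p p' ->
  let g := p' - p - 1 in
  let k := v1 (RIGHT (x (p, j))) in let l := v2 (RIGHT (x (p, j))) in
  let s := v1 (LEFT (x (p', j))) in let e := v2 (LEFT (x (p', j))) in
  let σ := sigS x j p p' in let ω := omg x j p p' in
  e = l + g /\ σ - ω = s - k /\ 0 <= σ <= g /\ 0 <= ω <= g /\
  (g = 0 -> k = s) /\ (1 <= g -> 1 - k <= σ <= g - k) /\ (1 <= g -> 1 - s <= ω <= g - s) /\
  (1 <= g -> 1 - l <= σ) /\ (1 <= g -> ω <= n - l).
Proof.
  intros Hj Hc g k l s e σ ω. destruct Hc as (H1&H2&H3&H4).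
  assert (Hg : 0 <= g) by (unfold g; lia).
  assert (Bd : forall m, 0 <= v1 (LEFT (x (m, j))) <= 1 /\ 0 <= v1 (RIGHT (x (m, j))) <= 1).
  { intro m. destruct (TL_bounds n _ Hn (proj1 Hx (m, j))) as (_&_&_&_&A&B&_). auto. }
  assert (E1 : e = l + g) by (exact (incr' n x Hx j p p' H1 H4)).
  assert (Eg : Z.of_nat (Z.to_nat g) = g) by (apply Z2Nat.id; lia).
  split; [exact E1|].
  split.
  { unfold σ, ω, sigS, omg. fold g. rewrite <- sumZ_minus.
    rewrite (sumZ_ext _ (fun m => v1 (LEFT (x (m + 1, j))) - v1 (LEFT (x (m, j))))).
    - rewrite (sumZ_tele (fun m => v1 (LEFT (x (m, j))))). rewrite Eg. unfold s, k. rewrite (adjH n x Hx p j).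
      replace (p + 1 + g) with p' by (unfold g; lia). lia.
    - intros m _. rewrite (adjH n x Hx m j). lia. }
  split. { unfold σ, sigS. fold g. rewrite <- Eg at 3. apply sumZ_bound. intros m _. specialize (Bd m). lia. }
  split. { unfold ω, omg. fold g. rewrite <- Eg at 3. apply sumZ_bound. intros m _. specialize (Bd m). lia. }
  split. { intro G0. unfold k, s. rewrite (adjH n x Hx p j). replace (p + 1) with p' by (unfold g in G0; lia). auto. }
  assert (Split : 1 <= g -> exists len', Z.to_nat g = S len' /\ Z.of_nat len' = g - 1).
  { intro G. exists (Z.to_nat (g - 1)). split; [|apply Z2Nat.id; lia].
    replace g with (Z.succ (g - 1)) at 1 by lia. rewrite Z2Nat.inj_succ by lia. reflexivity. }
  split.
  { intro G. destruct (Split G) as (len'&L1&L2). unfold σ, sigS. fold g. rewrite L1, sumZ_S.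
    assert (B := sumZ_bound (fun m => 1 - v1 (LEFT (x (m, j)))) (p + 1 + 1) len'
                  ltac:(intros m _; specialize (Bd m); lia)).
    unfold k. rewrite (adjH n x Hx p j). lia. }
  split.
  { intro G. destruct (Split G) as (len'&L1&L2). unfold ω, omg. fold g. rewrite L1. rewrite sumZ_last.
    assert (B := sumZ_bound (fun m => 1 - v1 (RIGHT (x (m, j)))) (p + 1) len'
                  ltac:(intros m _; specialize (Bd m); lia)).
    rewrite L2. replace (p + 1 + (g - 1)) with (p' - 1) by (unfold g; lia).
    assert (C : RIGHT (x (p' - 1, j)) = LEFT (x (p', j))) by
      (rewrite (adjH n x Hx); do 3 f_equal; lia).
    unfold s. rewrite <- C. lia. }
  split.
  { intros G. destruct (Split G) as (len'&L1&L2). unfold σ, sigS. fold g. rewrite L1, sumZ_S.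
    assert (B := sumZ_bound (fun m => 1 - v1 (LEFT (x (m, j)))) (p + 1 + 1) len'
                  ltac:(intros m _; specialize (Bd m); lia)).
    destruct (Sat n x Hx (p + 1) j ltac:(apply H4; unfold g in G; lia) Hj) as (a&b&i&?&?&?&E).
    assert (C := adjH n x Hx p j). unfold l. rewrite C, E. simp. lia. }
  { intros G. destruct (Split G) as (len'&L1&L2). unfold ω, omg. fold g. rewrite L1. rewrite sumZ_last.
    assert (B := sumZ_bound (fun m => 1 - v1 (RIGHT (x (m, j)))) (p + 1) len'
                  ltac:(intros m _; specialize (Bd m); lia)).
    rewrite L2. replace (p + 1 + (g - 1)) with (p' - 1) by (unfold g; lia).
    assert (C := incr' n x Hx j p (p' - 1) ltac:(unfold g in G; lia) ltac:(intros; apply H4; lia)).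
    destruct (Sat n x Hx (p' - 1) j ltac:(apply H4; unfold g in G; lia) Hj) as (a&b&i&?&?&?&E).
    rewrite E in C |- *. fold l in C. simp. unfold g in *. lia. }
Qed.

Definition consecR (q q' : Z) := consec (tr x) q q'.

Lemma cell_fact p p' q q' : consec x p p' -> consecR q q' ->
  omg x q' p p' = sigS x q p p' + (n - 1 - (q' - q - 1)) * (p' - p - 1).
Proof.
  intros Hc Hr. destruct Hc as (H1&H2&H3&H4). destruct Hr as (R1&R2&R3&R4).
  fold (rt x q) in R2. fold (rt x q') in R3.
  unfold omg, sigS. rewrite (sumZ_lin (fun m => 1 - v1 (RIGHT (x (m, q')))) (fun m => 1 - v1 (LEFT (x (m, q)))) (n - 1 - (q' - q - 1))).
  - rewrite Z2Nat.id by lia. lia.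
  - intros m Hm. rewrite Z2Nat.id in Hm by lia.
    assert (Cm : ct x m = 1) by (apply H4; lia).
    assert (A := incr' n (tr x) (validL_tr n x Hx) m q q' R1 R4).
    unfold tr in A; simpl in A. rewrite LEFT_hat, RIGHT_hat in A.
    destruct (Sat n x Hx m q Cm R2) as (a&b&i&?&?&?&E).
    destruct (Sat n x Hx m q' Cm R3) as (a'&b'&i'&?&?&?&E').
    rewrite E, E' in *. simp. lia.
Qed.

End Strip.

Lemma pe2 {A B : Type} (a c : A) (b d : B) : a = c -> b = d -> (a, b) = (c, d).
Proof. intros -> ->; reflexivity. Qed.
Ltac teq2 := unfold St, Wt, junction, mk_tile, lab, hat;
  repeat match goal with |- (_, _) = (_, _) => apply pe2 end; lia.

Definition phiH (n : Z) (x : config) (j p p' : Z) : label :=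
  let g := p' - p - 1 in
  lab (n - g) (n - g + 1 - v2 (RIGHT (x (p, j))))
      (sigS x j p p' + 1 - Z.max (v1 (RIGHT (x (p, j)))) (v1 (LEFT (x (p', j)))) + n - g).
Definition phiV (n : Z) (x : config) (i q q' : Z) : label := phiH n (tr x) i q q'.

Lemma tr_app x a b : tr x (a, b) = hat (x (b, a)).
Proof. reflexivity. Qed.

Lemma ct_trtr x m : ct (tr (tr x)) m = ct x m.
Proof. unfold ct. rewrite tr_tr. reflexivity. Qed.

Lemma consec_trtr x p p' : consec x p p' -> consec (tr (tr x)) p p'.
Proof. intros (A&B&C&D). repeat split; auto; rewrite ?ct_trtr; auto. intros; rewrite ct_trtr; auto. Qed.

Ltac prune Gg Gh Gn := repeat match goal with
   | H : ?A -> ?B |- _ =>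
       first [ let HA := fresh in assert (HA : A) by (clear - Gg Gh Gn; lia); specialize (H HA); clear HA
             | assert (~ A) by (clear - Gg Gh Gn; lia); clear H ]
   end.

Section Core.
Variable n : Z.
Hypothesis Hn : 1 <= n.
Variable x : config.
Hypothesis Hx : validL n x.

Lemma core p p' q q' : consec x p p' -> consecR x q q' ->
  TL n (mk_tile (phiV n x p' q q') (phiH n x q' p p') (phiV n x p q q') (phiH n x q p p')).
Proof.
  intros Hc Hr.
  assert (Hx' := validL_tr n x Hx).
  assert (Hc' : consecR (tr x) p p') by (apply consec_trtr; auto).
  assert (G1 := gap n Hn x Hx p p' Hc). assert (G2 := gap n Hn (tr x) Hx' q q' Hr).
  destruct Hc as (C1&C2&C3&C4). destruct Hr as (R1&R2&R3&R4).
  fold (rt x q) in R2. fold (rt x q') in R3.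
  assert (T2 : rt (tr x) p = 0) by (unfold rt; rewrite ct_trtr; auto).
  assert (T3 : rt (tr x) p' = 0) by (unfold rt; rewrite ct_trtr; auto).
  assert (FB := strip_facts n Hn x Hx q p p' R2 (conj C1 (conj C2 (conj C3 C4)))).
  assert (FT := strip_facts n Hn x Hx q' p p' R3 (conj C1 (conj C2 (conj C3 C4)))).
  assert (FL := strip_facts n Hn (tr x) Hx' p q q' T2 (conj R1 (conj R2 (conj R3 R4)))).
  assert (FR := strip_facts n Hn (tr x) Hx' p' q q' T3 (conj R1 (conj R2 (conj R3 R4)))).
  assert (CB := cell_fact n x Hx p p' q q' (conj C1 (conj C2 (conj C3 C4))) (conj R1 (conj R2 (conj R3 R4)))).
  assert (CL := cell_fact n (tr x) Hx' q q' p p' (conj R1 (conj R2 (conj R3 R4))) Hc').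
  cbv zeta in FB, FT, FL, FR.
  rewrite !tr_app in FL, FR.
  rewrite ?RIGHT_hat, ?LEFT_hat, ?TOP_hat, ?BOTTOM_hat in FL, FR.
  destruct (Jat n x Hx p q C2 R2) as (k0&l0&r0&s0&?&?&?&?&E0).
  destruct (Jat n x Hx p' q C3 R2) as (k1&l1&r1&s1&?&?&?&?&E1).
  destruct (Jat n x Hx p q' C2 R3) as (k2&l2&r2&s2&?&?&?&?&E2).
  destruct (Jat n x Hx p' q' C3 R3) as (k3&l3&r3&s3&?&?&?&?&E3).
  unfold phiV, phiH. rewrite !tr_app.
  rewrite ?RIGHT_hat, ?LEFT_hat, ?TOP_hat, ?BOTTOM_hat.
  rewrite E0, E1, E2, E3 in *. simp.
  set (sB := sigS x q p p') in *. set (sT := sigS x q' p p') in *.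
  set (sL := sigS (tr x) p q q') in *. set (sR := sigS (tr x) p' q q') in *.
  set (oB := omg x q p p') in *. set (oT := omg x q' p p') in *.
  set (oL := omg (tr x) p q q') in *. set (oR := omg (tr x) p' q q') in *.
  clear E0 E1 E2 E3.
  set (g := p' - p - 1) in *. set (h := q' - q - 1) in *.
  clearbody g h sB sT sL sR oB oT oL oR.
  clear C4 R4 Hc' Hx'.
  destruct FB as (B1&B2&B3&B4&B5&B6&B7&B8&B9).
  destruct FT as (U1&U2&U3&U4&U5&U6&U7&U8&U9).
  destruct FL as (L1&L2&L3&L4&L5&L6&L7&L8&L9).
  destruct FR as (Q1&Q2&Q3&Q4&Q5&Q6&Q7&Q8&Q9).
  assert (Gn : n = 1 \/ 2 <= n) by lia.
  unfold TL.
  destruct G1 as [Gg|Gg]; destruct G2 as [Gh|Gh]; destruct Gn as [Gn|Gn]; prune Gg Gh Gn.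
  - left; exists (sL + 1 - Z.max r0 l2 + n - h), (sB + 1 - Z.max k0 s1 + n - g);
    split; [lia|]; split; [lia|]; teq2.
  - left; exists (sL + 1 - Z.max r0 l2 + n - h), (sB + 1 - Z.max k0 s1 + n - g);
    split; [lia|]; split; [lia|]; teq2.
  - right; left; exists (n - h + 1 - s0), (n - h + 1 - s1), (sL + 1 - Z.max r0 l2 + n - h);
    split; [lia|]; split; [lia|]; split; [lia|]; left; teq2.
  - right; left; exists (n - h + 1 - s0), (n - h + 1 - s1), (sL + 1 - Z.max r0 l2 + n - h);
    split; [lia|]; split; [lia|]; split; [lia|]; left; teq2.
  - right; left; exists (n - g + 1 - l0), (n - g + 1 - l2), (sB + 1 - Z.max k0 s1 + n - g);
    split; [lia|]; split; [lia|]; split; [lia|]; right; teq2.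
  - right; left; exists (n - g + 1 - l0), (n - g + 1 - l2), (sB + 1 - Z.max k0 s1 + n - g);
    split; [lia|]; split; [lia|]; split; [lia|]; right; teq2.
  - right; right; exists (sB + 1 - Z.max k0 s1 + n - g - n), (n - g + 1 - l0),
      (sL + 1 - Z.max r0 l2 + n - h - n), (n - h + 1 - s0);
    split; [lia|]; split; [lia|]; split; [lia|]; split; [lia|]; teq2.
  - right; right; exists (sB + 1 - Z.max k0 s1 + n - g - n), (n - g + 1 - l0),
      (sL + 1 - Z.max r0 l2 + n - h - n), (n - h + 1 - s0);
    split; [lia|]; split; [lia|]; split; [lia|]; split; [lia|]; teq2.
Qed.

End Core.

Fixpoint ffind (f : Z -> bool) (m : Z) (fuel : nat) : Z :=
  match fuel with O => m | S k => if f m then m else ffind f (m + 1) k end.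
Fixpoint ffindd (f : Z -> bool) (m : Z) (fuel : nat) : Z :=
  match fuel with O => m | S k => if f m then m else ffindd f (m - 1) k end.

Lemma ffind_spec f a fuel : (exists m, a <= m < a + Z.of_nat fuel /\ f m = true) ->
  let r := ffind f a fuel in a <= r < a + Z.of_nat fuel /\ f r = true /\ (forall m, a <= m < r -> f m = false).
Proof.
  revert a. induction fuel; intros a (m&Hm&Hf); simpl in *.
  - lia.
  - destruct (f a) eqn:Ea.
    + split; [lia|]. split; auto. intros; lia.
    + assert (Hm' : a + 1 <= m) by (destruct (Z.eq_dec a m); [subst; congruence|lia]).
      destruct (IHfuel (a + 1)) as (A&B&C). { exists m. split; auto. lia. }
      split; [lia|]. split; auto. intros m' Hm''. destruct (Z.eq_dec a m'); [subst; auto|]. apply C; lia.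
Qed.

Lemma ffindd_spec f a fuel : (exists m, a - Z.of_nat fuel < m <= a /\ f m = true) ->
  let r := ffindd f a fuel in a - Z.of_nat fuel < r <= a /\ f r = true /\ (forall m, r < m <= a -> f m = false).
Proof.
  revert a. induction fuel; intros a (m&Hm&Hf); simpl in *.
  - lia.
  - destruct (f a) eqn:Ea.
    + split; [lia|]. split; auto. intros; lia.
    + assert (Hm' : m <= a - 1) by (destruct (Z.eq_dec a m); [subst; congruence|lia]).
      destruct (IHfuel (a - 1)) as (A&B&C). { exists m. split; auto. lia. }
      split; [lia|]. split; auto. intros m' Hm''. destruct (Z.eq_dec a m'); [subst; auto|]. apply C; lia.
Qed.

Lemma ffind_shift f g a c fuel : (forall z, f (z + c) = g z) -> ffind f (a + c) fuel = ffind g a fuel + c.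
Proof.
  intro H. revert a. induction fuel; intro a; simpl; auto.
  rewrite H. destruct (g a); auto. replace (a + c + 1) with (a + 1 + c) by lia. apply IHfuel.
Qed.

Lemma ffindd_shift f g a c fuel : (forall z, f (z + c) = g z) -> ffindd f (a + c) fuel = ffindd g a fuel + c.
Proof.
  intro H. revert a. induction fuel; intro a; simpl; auto.
  rewrite H. destruct (g a); auto. replace (a + c - 1) with (a - 1 + c) by lia. apply IHfuel.
Qed.

Definition iszero (x : config) (m : Z) : bool := Z.eqb (ct x m) 0.
Definition nextz (n : Z) (x : config) (m : Z) : Z := ffind (iszero x) (m + 1) (Z.to_nat (n + 2)).
Definition prevz (n : Z) (x : config) (m : Z) : Z := ffindd (iszero x) (m - 1) (Z.to_nat (n + 2)).

Lemma iszero_t x m : iszero x m = true -> ct x m = 0.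
Proof. unfold iszero. apply Z.eqb_eq. Qed.
Lemma iszero_f x m : iszero x m = false -> ct x m <> 0.
Proof. unfold iszero. apply Z.eqb_neq. Qed.

Section Enum.
Variable n : Z.
Hypothesis Hn : 1 <= n.
Variable x : config.
Hypothesis Hx : validL n x.

Lemma nextz_spec m : m < nextz n x m /\ ct x (nextz n x m) = 0 /\
  (forall m', m < m' < nextz n x m -> ct x m' = 1).
Proof.
  unfold nextz. destruct (ffind_spec (iszero x) (m + 1) (Z.to_nat (n + 2))) as (A&B&C).
  - destruct (zero_window n Hn x Hx (m + 1)) as (m'&H1&H2). exists m'. rewrite Z2Nat.id by lia.
    split; [lia|]. unfold iszero. rewrite H2. reflexivity.
  - split; [lia|]. apply iszero_t in B. split; [lia|]. intros m' Hm'.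
    specialize (C m' ltac:(lia)). apply iszero_f in C. destruct (ct_01 n x Hx m'); auto. lia.
Qed.

Lemma prevz_spec m : prevz n x m < m /\ ct x (prevz n x m) = 0 /\
  (forall m', prevz n x m < m' < m -> ct x m' = 1).
Proof.
  unfold prevz. destruct (ffindd_spec (iszero x) (m - 1) (Z.to_nat (n + 2))) as (A&B&C).
  - destruct (zero_window n Hn x Hx (m - n - 2)) as (m'&H1&H2). exists m'. rewrite Z2Nat.id by lia.
    split; [lia|]. unfold iszero. rewrite H2. reflexivity.
  - split; [lia|]. apply iszero_t in B. split; [lia|]. intros m' Hm'.
    specialize (C m' ltac:(lia)). apply iszero_f in C. destruct (ct_01 n x Hx m'); auto. lia.
Qed.

Lemma next_prev m : ct x m = 0 -> nextz n x (prevz n x m) = m.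
Proof.
  intro H. destruct (prevz_spec m) as (A&B&C). destruct (nextz_spec (prevz n x m)) as (D&E&F).
  destruct (Z.lt_total (nextz n x (prevz n x m)) m) as [G|[G|G]]; auto.
  - specialize (C _ (conj D G)). lia.
  - specialize (F m ltac:(lia)). lia.
Qed.

Lemma prev_next m : ct x m = 0 -> prevz n x (nextz n x m) = m.
Proof.
  intro H. destruct (nextz_spec m) as (A&B&C). destruct (prevz_spec (nextz n x m)) as (D&E&F).
  destruct (Z.lt_total (prevz n x (nextz n x m)) m) as [G|[G|G]]; auto.
  - specialize (F m ltac:(lia)). lia.
  - specialize (C _ (conj G D)). lia.
Qed.

Definition P0 := nextz n x (-1).
Definition Pz (i : Z) : Z :=
  if Z.leb 0 i then Nat.iter (Z.to_nat i) (nextz n x) P0 else Nat.iter (Z.to_nat (- i)) (prevz n x) P0.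

Lemma Pz_zero i : ct x (Pz i) = 0.
Proof.
  unfold Pz. destruct (Z.leb 0 i).
  - induction (Z.to_nat i); simpl. apply nextz_spec. apply nextz_spec.
  - induction (Z.to_nat (- i)); simpl. apply nextz_spec. apply prevz_spec.
Qed.

Lemma Pz_succ i : Pz (i + 1) = nextz n x (Pz i).
Proof.
  unfold Pz. destruct (Z.leb_spec 0 i) as [H|H].
  - rewrite (proj2 (Z.leb_le 0 (i + 1))) by lia. rewrite Z2Nat.inj_add by lia. simpl.
    rewrite Nat.add_comm. reflexivity.
  - destruct (Z.leb_spec 0 (i + 1)) as [H'|H'].
    + assert (i = -1) by lia. subst. simpl. rewrite next_prev; auto. apply nextz_spec.
    + replace (Z.to_nat (- i)) with (S (Z.to_nat (- (i + 1)))) by lia. simpl.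
      rewrite next_prev; auto.
      destruct (Z.to_nat (- (i + 1))); simpl. apply nextz_spec. apply prevz_spec.
Qed.

Lemma Pz_pred i : Pz (i - 1) = prevz n x (Pz i).
Proof.
  replace (Pz i) with (Pz (i - 1 + 1)) by (f_equal; lia). rewrite Pz_succ.
  rewrite prev_next; auto. apply Pz_zero.
Qed.

Lemma Pz_consec i : consec x (Pz i) (Pz (i + 1)).
Proof.
  rewrite Pz_succ. destruct (nextz_spec (Pz i)) as (A&B&C). split; auto. split; [apply Pz_zero|]. auto.
Qed.

End Enum.

Definition yconf (n : Z) (x : config) : config := fun ij =>
  let P := Pz n x in let Q := Pz n (tr x) in let i := fst ij in let j := snd ij in
  mk_tile (phiV n x (P (i + 1)) (Q j) (Q (j + 1))) (phiH n x (Q (j + 1)) (P i) (P (i + 1)))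
          (phiV n x (P i) (Q j) (Q (j + 1))) (phiH n x (Q j) (P i) (P (i + 1))).

Lemma y_valid n x : 1 <= n -> validL n x -> validL n (yconf n x).
Proof.
  intros Hn Hx. split.
  - intros [i j]. unfold yconf; simpl. apply core; auto.
    + apply Pz_consec; auto.
    + unfold consecR. apply Pz_consec; auto. apply validL_tr; auto.
  - intros m1 m2. unfold yconf; simpl. split; reflexivity.
Qed.

Lemma ct_y n x i : ct (yconf n x) i = n - (Pz n x (i + 1) - Pz n x i - 1).
Proof. unfold ct, yconf, phiH; simpl. unfold v0, TOP, mk_tile, lab. simpl. reflexivity. Qed.

Lemma iter_succ_r {A} (f : A -> A) k a : Nat.iter (S k) f a = Nat.iter k f (f a).
Proof. induction k; simpl; auto. simpl in IHk. rewrite IHk. reflexivity. Qed.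

Section Per.
Variable n : Z.
Hypothesis Hn : 1 <= n.
Variable x : config.
Hypothesis Hx : validL n x.
Variable a : Z.
Hypothesis Ha : forall m, ct x (m + a) = ct x m.

Lemma nextz_per m : nextz n x (m + a) = nextz n x m + a.
Proof.
  unfold nextz. replace (m + a + 1) with (m + 1 + a) by lia. apply ffind_shift.
  intro z. unfold iszero. rewrite Ha. reflexivity.
Qed.

Lemma prevz_per m : prevz n x (m + a) = prevz n x m + a.
Proof.
  unfold prevz. replace (m + a - 1) with (m - 1 + a) by lia. apply ffindd_shift.
  intro z. unfold iszero. rewrite Ha. reflexivity.
Qed.

Lemma ct_permul t m : ct x (m + t * a) = ct x m.
Proof.
  revert m. pattern t. apply Zind_both.
  - intro m. f_equal. lia.
  - intros j IH m. replace (m + (j + 1) * a) with (m + j * a + a) by lia. rewrite Ha. apply IH.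
  - intros j IH m. rewrite <- (Ha (m + (j - 1) * a)). replace (m + (j - 1) * a + a) with (m + j * a) by lia. apply IH.
Qed.

End Per.

Lemma reach n (Hn : 1 <= n) x (Hx : validL n x) (d : nat) : forall m0 m1,
  ct x m0 = 0 -> ct x m1 = 0 -> m1 - m0 = Z.of_nat d ->
  exists k : nat, Nat.iter k (nextz n x) m0 = m1 /\ Z.of_nat k <= m1 - m0 /\
     ((exists c, m0 < c < m1 /\ ct x c = 1) -> Z.of_nat k < m1 - m0).
Proof.
  induction d as [d IH] using lt_wf_ind. intros m0 m1 H0 H1 Hd.
  destruct (Nat.eq_dec d 0) as [D|D].
  - subst. exists O. simpl. split; [lia|]. split; [lia|]. intros (c&Hc&_). lia.
  - destruct (nextz_spec n Hn x Hx m0) as (A&B&C).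
    assert (Hle : nextz n x m0 <= m1).
    { destruct (Z_le_gt_dec (nextz n x m0) m1); auto. specialize (C m1 ltac:(lia)). lia. }
    destruct (IH (Z.to_nat (m1 - nextz n x m0)) ltac:(lia) (nextz n x m0) m1 B H1 ltac:(lia)) as (k&K1&K2&K3).
    exists (S k). rewrite iter_succ_r. split; auto. split; [lia|].
    intros (c&Hc&Hc1). destruct (Z.lt_total c (nextz n x m0)) as [E|[E|E]].
    + assert (nextz n x m0 <> c + 0) by (intro; subst; lia). lia.
    + subst; lia.
    + assert (K := K3 (ex_intro _ c (conj (conj E (proj2 Hc)) Hc1))). lia.
Qed.

Lemma Pz_nat n x (k : nat) : Pz n x (Z.of_nat k) = Nat.iter k (nextz n x) (Pz n x 0).
Proof.
  unfold Pz. simpl. rewrite (proj2 (Z.leb_le 0 (Z.of_nat k))) by lia. rewrite Nat2Z.id. reflexivity.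
Qed.

Theorem no_period (a : nat) : forall n x, 1 <= n -> validL n x -> (0 < a)%nat ->
  (forall m, ct x (m + Z.of_nat a) = ct x m) -> False.
Proof.
  induction a as [a IH] using lt_wf_ind. intros n x Hn Hx Ha Hper.
  set (A := Z.of_nat a) in *.
  set (p0 := Pz n x 0).
  assert (Z0 : ct x p0 = 0) by apply (Pz_zero n Hn x Hx).
  assert (Z1 : ct x (p0 + A) = 0) by (rewrite Hper; auto).
  destruct (reach n Hn x Hx a p0 (p0 + A) Z0 Z1 ltac:(unfold A; lia)) as (k&K1&K2&K3).
  destruct (ct_has_one n Hn x Hx) as (m&Hm).
  set (c := p0 + (m - p0) mod A).
  assert (Hc : ct x c = 1).
  { rewrite <- Hm. unfold c. rewrite <- (ct_permul x A Hper (- ((m - p0) / A)) m).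
    f_equal. assert (A <> 0) by (unfold A; lia). rewrite (Z.mod_eq (m - p0) A) by auto. lia. }
  assert (Hcb : 0 <= (m - p0) mod A < A) by (apply Z.mod_pos_bound; unfold A; lia).
  assert (Hc0 : c <> p0) by (intro E; rewrite E in Hc; lia).
  assert (Kl : Z.of_nat k < A) by (apply (Z.lt_le_trans _ (p0 + A - p0)); [apply K3; exists c; unfold c in *; split; [lia|auto]|lia]).
  assert (Kp : (0 < k)%nat) by (destruct k; [simpl in K1; unfold A in *; lia|lia]).
  apply (IH k ltac:(lia) n (yconf n x) Hn (y_valid n x Hn Hx) Kp).
  assert (PK : forall i, Pz n x (i + Z.of_nat k) = Pz n x i + A).
  { apply Zind_both.
    - replace (0 + Z.of_nat k) with (Z.of_nat k) by lia. rewrite Pz_nat. fold p0. rewrite K1. reflexivity.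
    - intros i IHi. replace (i + 1 + Z.of_nat k) with (i + Z.of_nat k + 1) by lia.
      rewrite (Pz_succ n Hn x Hx), IHi, (nextz_per n x A Hper), <- (Pz_succ n Hn x Hx). reflexivity.
    - intros i IHi. replace (i - 1 + Z.of_nat k) with (i + Z.of_nat k - 1) by lia.
      rewrite (Pz_pred n Hn x Hx), IHi, (prevz_per n x A Hper), <- (Pz_pred n Hn x Hx). reflexivity. }
  intro i. rewrite !ct_y. replace (i + Z.of_nat k + 1) with (i + 1 + Z.of_nat k) by lia.
  rewrite !PK. lia.
Qed.

Lemma no_periodZ n x a : 1 <= n -> validL n x -> a <> 0 -> (forall m, ct x (m + a) = ct x m) -> False.
Proof.
  intros Hn Hx Ha Hp. destruct (Z_lt_le_dec 0 a) as [H|H].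
  - apply (no_period (Z.to_nat a) n x Hn Hx ltac:(lia)). rewrite Z2Nat.id by lia. auto.
  - apply (no_period (Z.to_nat (- a)) n x Hn Hx ltac:(lia)). rewrite Z2Nat.id by lia.
    intro m. rewrite <- (Hp (m + - a)). f_equal. lia.
Qed.

Theorem aperiodic_part n : 1 <= n -> forall x k, valid n x -> k <> (0, 0) -> Defs.shift k x <> x.
Proof.
  intros Hn x [a b] Hv Hk E. apply valid_validL in Hv.
  assert (Hs : forall i j, x (i + a, j + b) = x (i, j)).
  { intros i j. change (Defs.shift (a, b) x (i, j) = x (i, j)). rewrite E. reflexivity. }
  destruct (Z.eq_dec a 0) as [Ha|Ha].
  - subst a. assert (Hb : b <> 0) by (intro; subst; apply Hk; reflexivity).
    apply (no_periodZ n (tr x) b Hn (validL_tr n x Hv) Hb).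
    intro m. unfold ct, tr; simpl. rewrite <- (Hs 0 m). replace (0 + 0) with 0 by lia. reflexivity.
  - apply (no_periodZ n x a Hn Hv Ha).
    intro m. rewrite <- (ct_const n x Hv (m + a) b). unfold ct. rewrite <- (Hs m 0). replace (0 + b) with b by lia. reflexivity.
Qed.

Definition sh (L : label) : Z := v2 L - v0 L.
Definition lL (L : label) : Z := 1 - v1 L + v0 L.
Definition kL (L : label) : Z := if Z.eqb (sh L) 0 then 1 else 0.
Definition Hs (n : Z) (L : label) (o : Z) : tile :=
  St n (if Z.leb (sh L) o then 1 else 0) (if Z.leb (sh L) (o + 1) then 1 else 0) (lL L + o).
Definition Block (n : Z) (t : tile) (p q : Z) : tile :=
  let Lb := BOTTOM t in let Ll := LEFT t in
  if Z.eqb p 0 then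
    (if Z.eqb q 0 then junction n (kL Lb) (lL Lb) (kL Ll) (lL Ll) else hat (Hs n Ll (q - 1)))
  else
    (if Z.eqb q 0 then Hs n Lb (p - 1)
     else Wt n (1 + (if Z.leb (sh Ll) (q - 1) then 1 else 0) + (p - 1))
               (1 + (if Z.leb (sh Lb) (p - 1) then 1 else 0) + (q - 1))).
Definition wB (n : Z) (t : tile) : Z := n + 1 - v0 (BOTTOM t).
Definition hB (n : Z) (t : tile) : Z := n + 1 - v0 (LEFT t).
Definition Edge (n : Z) (L : label) (o : Z) : label :=
  if Z.eqb o 0 then lab 0 (lL L) (kL L + n) else BOTTOM (Hs n L (o - 1)).

Definition TO (n : Z) (t : tile) : Prop :=
  (exists i j, 1 <= i <= n /\ 1 <= j <= n /\ t = Wt n i j) \/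
  (exists a b i, 0 <= a <= b /\ b <= 1 /\ a <= i <= n - 1 + b /\ (t = St n a b i \/ t = hat (St n a b i))) \/
  (exists k l r s, 0 <= k <= l /\ l <= 1 /\ 0 <= r <= s /\ s <= 1 /\
     ~ (k = 0 /\ l = 0 /\ r = 1 /\ s = 1) /\ ~ (k = 1 /\ l = 1 /\ r = 0 /\ s = 0) /\ t = junction n k l r s).

Lemma TO_in_T n t : TO n t -> in_T n t.
Proof.
  unfold TO, in_T; intros [H|[H|H]].
  - left. destruct H as (i&j&?&?&->). exists i, j. auto.
  - destruct H as (a&b&i&?&?&?&Ht).
    assert (Hab : (a = 0 /\ b = 0) \/ (a = 0 /\ b = 1) \/ (a = 1 /\ b = 1)) by lia.
    destruct Ht as [Ht|Ht]; destruct Hab as [[-> ->]|[[-> ->]|[-> ->]]]; subst t.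
    + right; left. exists i. split; [lia|]. teq2.
    + right; right; left. exists i. split; [lia|]. teq2.
    + right; right; right; left. exists i. split; [lia|]. teq2.
    + do 4 right; left. exists (St n 0 0 i). split; [|reflexivity]. exists i. split; [lia|]. teq2.
    + do 5 right; left. exists (St n 0 1 i). split; [|reflexivity]. exists i. split; [lia|]. teq2.
    + do 6 right; left. exists (St n 1 1 i). split; [|reflexivity]. exists i. split; [lia|]. teq2.
  - do 7 right. destruct H as (k&l&r&s&?&?&?&?&?&?&->). exists k, l, r, s.
    unfold kl_ok. repeat split; try lia; auto.
Qed.

Lemma in_T_TO n t : in_T n t -> TO n t.
Proof.
  unfold in_T, TO; intros [H|[H|[H|[H|[H|[H|[H|H]]]]]]].
  - left. destruct H as (i&j&?&?&->). exists i, j. auto.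
  - right; left. destruct H as (i&?&->). exists 0, 0, i. repeat split; try lia. left. teq2.
  - right; left. destruct H as (i&?&->). exists 0, 1, i. repeat split; try lia. left. teq2.
  - right; left. destruct H as (i&?&->). exists 1, 1, i. repeat split; try lia. left. teq2.
  - right; left. destruct H as [s [[i [Hi Hs]] Ht]]; subst. exists 0, 0, i. repeat split; try lia. right. teq2.
  - right; left. destruct H as [s [[i [Hi Hs]] Ht]]; subst. exists 0, 1, i. repeat split; try lia. right. teq2.
  - right; left. destruct H as [s [[i [Hi Hs]] Ht]]; subst. exists 1, 1, i. repeat split; try lia. right. teq2.
  - right; right. destruct H as (k&l&r&s&H1&H2&H3&H4&->). unfold kl_ok in *.
    exists k, l, r, s. repeat split; try lia; auto.
Qed.

Ltac decide_ifs :=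
  repeat match goal with
  | |- context [Z.eqb ?a ?b] => destruct (Z.eqb_spec a b)
  | |- context [Z.leb ?a ?b] => destruct (Z.leb_spec a b)
  end; cbv beta iota in *.

Ltac unf := unfold Edge, Block, Hs, wB, hB, kL, lL, sh in *; simp.

Ltac destr_TO H := destruct H as [H|[H|H]];
  [ destruct H as (i&j&?&?&Ht)
  | destruct H as (a&b&i&?&?&?&Ht); destruct Ht as [Ht|Ht]
  | destruct H as (k&l&r&s&?&?&?&?&?&?&Ht) ]; subst.

Ltac solve_TO :=
  match goal with
  | |- TO ?n ((1,1,_),(1,1,_),(1,1,?i),(1,1,?j)) => left; exists i, j; split; [lia|split;[lia|teq2]]
  | |- TO ?n ((0,?b,_),(1,1,_),(0,?a,?i),(1,1,_)) => right; left; exists a, b, i; split; [lia|split;[lia|split;[lia|left;teq2]]]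
  | |- TO ?n ((1,1,_),(0,?b,_),(1,1,_),(0,?a,?i)) => right; left; exists a, b, i; split; [lia|split;[lia|split;[lia|right;teq2]]]
  | |- TO ?n ((0,?k,?l),(0,?r,?s),_,_) => right; right; exists k, l, r, s;
        split; [lia|split;[lia|split;[lia|split;[lia|split;[lia|split;[lia|teq2]]]]]]
  end.

Section Blk.
Variable n : Z.
Hypothesis Hn : 1 <= n.

Lemma B1 t p q : TO n t -> 0 <= p < wB n t -> 0 <= q < hB n t -> TO n (Block n t p q).
Proof. intros H Hp Hq. destr_TO H; unf; decide_ifs; solve_TO. Qed.

Lemma B2 t p q : TO n t -> 0 <= p -> p + 1 < wB n t -> 0 <= q < hB n t ->
  RIGHT (Block n t p q) = LEFT (Block n t (p + 1) q).
Proof. intros H Hp Hp' Hq. destr_TO H; unf; decide_ifs; teq2. Qed.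

Lemma B3 t p q : TO n t -> 0 <= p < wB n t -> 0 <= q -> q + 1 < hB n t ->
  TOP (Block n t p q) = BOTTOM (Block n t p (q + 1)).
Proof. intros H Hp Hq Hq'. destr_TO H; unf; decide_ifs; teq2. Qed.

Lemma B4 t q : TO n t -> 0 <= q < hB n t -> RIGHT (Block n t (wB n t - 1) q) = Edge n (RIGHT t) q.
Proof. intros H Hq. destr_TO H; unf; decide_ifs; teq2. Qed.

Lemma B5 t p : TO n t -> 0 <= p < wB n t -> TOP (Block n t p (hB n t - 1)) = Edge n (TOP t) p.
Proof. intros H Hp. destr_TO H; unf; decide_ifs; teq2. Qed.

End Blk.

Lemma B6l n t q : 0 <= q -> LEFT (Block n t 0 q) = Edge n (LEFT t) q.
Proof. intros Hq. unfold Block, Edge. destruct (Z.eqb_spec q 0); simpl. - unfold junction, mk_tile, lab, LEFT; simp. reflexivity. - destruct (Hs n (LEFT t) (q - 1)) as [[[? ?] ?] ?]. reflexivity. Qed.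

Lemma B6b n t p : 0 <= p -> BOTTOM (Block n t p 0) = Edge n (BOTTOM t) p.
Proof. intros Hp. unfold Block, Edge. destruct (Z.eqb_spec p 0); simpl. - unfold junction, mk_tile, lab, BOTTOM; simp. reflexivity. - reflexivity. Qed.


Fixpoint info (w : Z -> Z) (i : nat) : Z * Z :=
  match i with
  | O => (0, 0)
  | S i' => let (I, p) := info w i' in if Z.ltb (p + 1) (w I) then (I, p + 1) else (I + 1, 0)
  end.

Section Info.
Variable w : Z -> Z.
Hypothesis Hw : forall I, 1 <= w I.

Lemma info_inv i : 0 <= fst (info w i) <= Z.of_nat i /\ 0 <= snd (info w i) < w (fst (info w i)).
Proof.
  induction i; simpl. - specialize (Hw 0). lia.
  - destruct (info w i) as [I p]. simpl in *. destruct (Z.ltb_spec (p + 1) (w I)); simpl.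
    + lia.
    + specialize (Hw (I + 1)). lia.
Qed.

Lemma info_step i : let (I, p) := info w i in
  (info w (S i) = (I, p + 1) /\ p + 1 < w I) \/ (info w (S i) = (I + 1, 0) /\ p + 1 = w I).
Proof.
  assert (H := info_inv i). simpl. destruct (info w i) as [I p]. simpl in H.
  destruct (Z.ltb_spec (p + 1) (w I)); [left|right]; split; auto; lia.
Qed.

Lemma info_lt i : 2 <= w 0 -> (1 <= i)%nat -> fst (info w i) <= Z.of_nat i - 1.
Proof.
  intros H2 Hi. induction i as [|i IH]; [lia|].
  destruct i as [|i].
  - simpl. destruct (Z.ltb_spec 1 (w 0)); simpl; lia.
  - specialize (IH ltac:(lia)). assert (A := info_step (S i)). destruct (info w (S i)) as [I p].
    cbn [fst] in IH. destruct A as [[A _]|[A _]]; rewrite A; cbn [fst]; lia.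
Qed.

End Info.

Definition cw (n : Z) (y : config) (I : Z) : Z := if Z.eqb (v0 (BOTTOM (y (I, 0)))) 0 then n + 1 else n.
Definition rh (n : Z) (y : config) (J : Z) : Z := if Z.eqb (v0 (LEFT (y (0, J)))) 0 then n + 1 else n.

Definition Sub (n : Z) (y : config) : config := fun m =>
  let (I, p) := info (cw n y) (Z.to_nat (fst m)) in
  let (J, q) := info (rh n y) (Z.to_nat (snd m)) in
  Block n (y (I, J)) p q.

Definition validBox (n : Z) (y : config) (N : Z) : Prop :=
  (forall i j, 0 <= i < N -> 0 <= j < N -> TO n (y (i, j))) /\
  (forall i j, 0 <= i -> i + 1 < N -> 0 <= j < N -> RIGHT (y (i, j)) = LEFT (y (i + 1, j))) /\
  (forall i j, 0 <= i < N -> 0 <= j -> j + 1 < N -> TOP (y (i, j)) = BOTTOM (y (i, j + 1))).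

Lemma TO_v0 n t : TO n t -> v0 (RIGHT t) = v0 (LEFT t) /\ v0 (TOP t) = v0 (BOTTOM t) /\
  (v0 (LEFT t) = 0 \/ v0 (LEFT t) = 1) /\ (v0 (TOP t) = 0 \/ v0 (TOP t) = 1).
Proof. intro H. apply (TL_v0 n). apply in_T_TL. apply TO_in_T. exact H. Qed.

Section SubV.
Variable n : Z.
Hypothesis Hn : 1 <= n.
Variable y : config.
Variable N : Z.
Hypothesis HN : 1 <= N.
Hypothesis Hy : validBox n y N.

Lemma col_const I J : 0 <= I < N -> 0 <= J < N -> v0 (BOTTOM (y (I, J))) = v0 (BOTTOM (y (I, 0))).
Proof.
  intros HI HJ. destruct Hy as (H1&H2&H3).
  replace J with (Z.of_nat (Z.to_nat J)) in * by lia. induction (Z.to_nat J) as [|k IH]; [reflexivity|].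
  rewrite Nat2Z.inj_succ in *. rewrite <- IH by lia. rewrite <- Z.add_1_r.
  rewrite <- (H3 I (Z.of_nat k)) by lia.
  destruct (TO_v0 n _ (H1 I (Z.of_nat k) ltac:(lia) ltac:(lia))) as (_&A&_). exact A.
Qed.

Lemma row_const I J : 0 <= I < N -> 0 <= J < N -> v0 (LEFT (y (I, J))) = v0 (LEFT (y (0, J))).
Proof.
  intros HI HJ. destruct Hy as (H1&H2&H3).
  replace I with (Z.of_nat (Z.to_nat I)) in * by lia. induction (Z.to_nat I) as [|k IH]; [reflexivity|].
  rewrite Nat2Z.inj_succ in *. rewrite <- IH by lia. rewrite <- Z.add_1_r.
  rewrite <- (H2 (Z.of_nat k) J) by lia.
  destruct (TO_v0 n _ (H1 (Z.of_nat k) J ltac:(lia) ltac:(lia))) as (A&_). exact A.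
Qed.

Lemma cw_wB I J : 0 <= I < N -> 0 <= J < N -> cw n y I = wB n (y (I, J)).
Proof.
  intros HI HJ. unfold cw, wB. rewrite <- (col_const I J HI HJ).
  destruct (TO_v0 n _ (proj1 Hy I J HI HJ)) as (_&A&_&B).
  destruct (Z.eqb_spec (v0 (BOTTOM (y (I, J)))) 0); lia.
Qed.

Lemma rh_hB I J : 0 <= I < N -> 0 <= J < N -> rh n y J = hB n (y (I, J)).
Proof.
  intros HI HJ. unfold rh, hB. rewrite <- (row_const I J HI HJ).
  destruct (TO_v0 n _ (proj1 Hy I J HI HJ)) as (_&_&B&_).
  destruct (Z.eqb_spec (v0 (LEFT (y (I, J)))) 0); lia.
Qed.

Hypothesis H00b : v0 (BOTTOM (y (0, 0))) = 0.
Hypothesis H00l : v0 (LEFT (y (0, 0))) = 0.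

Lemma cw_pos I : 1 <= cw n y I. Proof. unfold cw. destruct (Z.eqb _ _); lia. Qed.
Lemma rh_pos J : 1 <= rh n y J. Proof. unfold rh. destruct (Z.eqb _ _); lia. Qed.

Lemma inbox_c i : 0 <= i < N + 1 -> 0 <= fst (info (cw n y) (Z.to_nat i)) < N.
Proof.
  intro Hi. assert (A := info_inv _ cw_pos (Z.to_nat i)).
  destruct (Z.eq_dec i 0) as [E|E].
  - subst. simpl. lia.
  - assert (B := info_lt _ cw_pos (Z.to_nat i) ltac:(unfold cw; rewrite H00b; simpl; lia) ltac:(lia)). lia.
Qed.

Lemma inbox_r j : 0 <= j < N + 1 -> 0 <= fst (info (rh n y) (Z.to_nat j)) < N.
Proof.
  intro Hj. assert (A := info_inv _ rh_pos (Z.to_nat j)).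
  destruct (Z.eq_dec j 0) as [E|E].
  - subst. simpl. lia.
  - assert (B := info_lt _ rh_pos (Z.to_nat j) ltac:(unfold rh; rewrite H00l; simpl; lia) ltac:(lia)). lia.
Qed.

Lemma Sub_valid : validBox n (Sub n y) (N + 1).
Proof.
  destruct Hy as (H1&H2&H3).
  split; [|split].
  - intros i j Hi Hj. unfold Sub; simpl.
    assert (Ci := inbox_c i Hi). assert (Rj := inbox_r j Hj).
    assert (Ai := info_inv _ cw_pos (Z.to_nat i)). assert (Aj := info_inv _ rh_pos (Z.to_nat j)).
    destruct (info (cw n y) (Z.to_nat i)) as [I p]. destruct (info (rh n y) (Z.to_nat j)) as [J q].
    simpl in *. apply B1; auto.
    + rewrite <- (cw_wB I J) by lia. lia.
    + rewrite <- (rh_hB I J) by lia. lia.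
  - intros i j Hi Hi' Hj. unfold Sub; simpl.
    replace (Z.to_nat (i + 1)) with (S (Z.to_nat i)) by lia.
    assert (Ci := inbox_c i ltac:(lia)). assert (Ci' := inbox_c (i + 1) ltac:(lia)).
    replace (Z.to_nat (i + 1)) with (S (Z.to_nat i)) in Ci' by lia.
    assert (Rj := inbox_r j Hj).
    assert (Ai := info_inv _ cw_pos (Z.to_nat i)). assert (Aj := info_inv _ rh_pos (Z.to_nat j)).
    assert (St := info_step _ cw_pos (Z.to_nat i)).
    destruct (info (cw n y) (Z.to_nat i)) as [I p]. destruct (info (rh n y) (Z.to_nat j)) as [J q].
    simpl in *. destruct St as [[E L]|[E L]]; rewrite E in *; simpl in *.
    + apply (B2 n Hn (y (I, J)) p q); [apply H1; lia | lia | rewrite <- (cw_wB I J) by lia; lia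
        | rewrite <- (rh_hB I J) by lia; lia].
    + rewrite B6l by lia. rewrite <- (H2 I J) by lia.
      rewrite <- (B4 n Hn (y (I, J)) q); [|apply H1; lia|rewrite <- (rh_hB I J) by lia; lia].
      replace (wB n (y (I, J)) - 1) with p by (rewrite <- (cw_wB I J) by lia; lia). reflexivity.
  - intros i j Hi Hj Hj'. unfold Sub; simpl.
    replace (Z.to_nat (j + 1)) with (S (Z.to_nat j)) by lia.
    assert (Rj := inbox_r j ltac:(lia)). assert (Rj' := inbox_r (j + 1) ltac:(lia)).
    replace (Z.to_nat (j + 1)) with (S (Z.to_nat j)) in Rj' by lia.
    assert (Ci := inbox_c i Hi).
    assert (Ai := info_inv _ cw_pos (Z.to_nat i)). assert (Aj := info_inv _ rh_pos (Z.to_nat j)).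
    assert (St := info_step _ rh_pos (Z.to_nat j)).
    destruct (info (cw n y) (Z.to_nat i)) as [I p]. destruct (info (rh n y) (Z.to_nat j)) as [J q].
    simpl in *. destruct St as [[E L]|[E L]]; rewrite E in *; simpl in *.
    + apply (B3 n Hn (y (I, J)) p q); [apply H1; lia | rewrite <- (cw_wB I J) by lia; lia | lia
        | rewrite <- (rh_hB I J) by lia; lia].
    + rewrite B6b by lia. rewrite <- (H3 I J) by lia.
      rewrite <- (B5 n Hn (y (I, J)) p); [|apply H1; lia|rewrite <- (cw_wB I J) by lia; lia].
      replace (hB n (y (I, J)) - 1) with q by (rewrite <- (rh_hB I J) by lia; lia). reflexivity.
Qed.

Lemma Sub00 : v0 (BOTTOM (Sub n y (0, 0))) = 0 /\ v0 (LEFT (Sub n y (0, 0))) = 0.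
Proof. unfold Sub. simpl. unfold Block. simpl. simp. split; reflexivity. Qed.

End SubV.

Fixpoint iterS (n : Z) (k : nat) : config :=
  match k with O => fun _ => junction n 0 0 0 0 | S k' => Sub n (iterS n k') end.

Lemma iterS_valid n (Hn : 1 <= n) k : validBox n (iterS n k) (Z.of_nat k + 1) /\
  v0 (BOTTOM (iterS n k (0, 0))) = 0 /\ v0 (LEFT (iterS n k (0, 0))) = 0.
Proof.
  induction k as [|k (IH1&IH2&IH3)].
  - simpl. split; [|split; reflexivity]. split; [|split].
    + intros i j Hi Hj. right; right. exists 0, 0, 0, 0. repeat split; try lia; auto.
    + intros; lia.
    + intros; lia.
  - cbn [iterS]. split.
    + replace (Z.of_nat (S k) + 1) with ((Z.of_nat k + 1) + 1) by lia. apply Sub_valid; auto; lia.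
    + apply Sub00.
Qed.

Definition boxC (n : Z) (z : config) (M : Z) : Prop :=
  (forall i j, -M <= i <= M -> -M <= j <= M -> in_T n (z (i, j))) /\
  (forall i j, -M <= i -> i + 1 <= M -> -M <= j <= M -> RIGHT (z (i, j)) = LEFT (z (i + 1, j))) /\
  (forall i j, -M <= i <= M -> -M <= j -> j + 1 <= M -> TOP (z (i, j)) = BOTTOM (z (i, j + 1))).

Lemma patches n (Hn : 1 <= n) M : 0 <= M -> exists z, boxC n z M.
Proof.
  intro HM. destruct (iterS_valid n Hn (Z.to_nat (2 * M))) as ((A&B&C)&_).
  rewrite Z2Nat.id in A, B, C by lia.
  exists (fun m => iterS n (Z.to_nat (2 * M)) (fst m + M, snd m + M)). split; [|split]; simpl.
  - intros i j Hi Hj. apply TO_in_T. apply A; lia.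
  - intros i j Hi Hi' Hj. replace (i + 1 + M) with (i + M + 1) by lia. apply B; lia.
  - intros i j Hi Hj Hj'. replace (j + 1 + M) with (j + M + 1) by lia. apply C; lia.
Qed.

Definition zrange (m : Z) : list Z := map Z.of_nat (seq 0 (Z.to_nat m)).
Definition Llab (n : Z) : list label :=
  flat_map (fun a => flat_map (fun b => map (fun c => lab a b c) (zrange (n + 2))) [0; 1]) [0; 1].
Definition Ltiles (n : Z) : list tile :=
  flat_map (fun a => flat_map (fun b => flat_map (fun c => map (fun d => mk_tile a b c d) (Llab n)) (Llab n)) (Llab n)) (Llab n).

Lemma zrange_in m c : 0 <= c < m -> In c (zrange m).
Proof.
  intro H. unfold zrange. apply in_map_iff. exists (Z.to_nat c). split; [lia|]. apply in_seq. lia.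
Qed.

Lemma Llab_in n (L : label) : (v0 L = 0 \/ v0 L = 1) -> (v1 L = 0 \/ v1 L = 1) -> 0 <= v2 L <= n + 1 -> In L (Llab n).
Proof.
  destruct L as [[a b] c]. unfold v0, v1, v2; simpl. intros Ha Hb Hc. unfold Llab.
  apply in_flat_map. exists a. split; [simpl; lia|].
  apply in_flat_map. exists b. split; [simpl; lia|].
  apply in_map_iff. exists c. split; [reflexivity|]. apply zrange_in. lia.
Qed.

Lemma Ltiles_in n (Hn : 1 <= n) t : in_T n t -> In t (Ltiles n).
Proof.
  intro H. apply in_T_TL in H. destruct (TL_v0 n t H) as (A&B&C&D). destruct (TL_bounds n t Hn H) as (E1&E2&E3&E4&F1&F2&F3&F4).
  unfold Ltiles.
  apply in_flat_map. exists (RIGHT t). split; [apply Llab_in; lia|].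
  apply in_flat_map. exists (TOP t). split; [apply Llab_in; lia|].
  apply in_flat_map. exists (LEFT t). split; [apply Llab_in; lia|].
  apply in_map_iff. exists (BOTTOM t). split; [|apply Llab_in; lia].
  destruct t as [[[? ?] ?] ?]. reflexivity.
Qed.

Definition zdec (k : nat) : Z := if Nat.even k then Z.of_nat (Nat.div2 k) else - Z.of_nat (Nat.div2 k) - 1.
Definition zenc (z : Z) : nat := if Z.leb 0 z then Z.to_nat (2 * z) else Z.to_nat (-2 * z - 1).

Lemma div2_double k : Nat.div2 (2 * k) = k.
Proof. apply Nat.div2_double. Qed.

Lemma ev2 k : Nat.even (2 * k) = true.
Proof. rewrite Nat.even_mul. reflexivity. Qed.
Lemma ev2s k : Nat.even (S (2 * k)) = false.
Proof. rewrite Nat.even_succ, Nat.odd_mul. reflexivity. Qed.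

Lemma zdec_zenc z : zdec (zenc z) = z.
Proof.
  unfold zenc, zdec. destruct (Z.leb_spec 0 z).
  - replace (Z.to_nat (2 * z)) with (2 * Z.to_nat z)%nat by lia. rewrite ev2, div2_double. lia.
  - replace (Z.to_nat (-2 * z - 1)) with (S (2 * Z.to_nat (- z - 1)))%nat by lia.
    rewrite ev2s, Nat.div2_succ_double. lia.
Qed.

Lemma zenc_zdec k : zenc (zdec k) = k.
Proof.
  unfold zdec. assert (D := Nat.div2_odd k). destruct (Nat.even k) eqn:E.
  - assert (Nat.odd k = false) by (unfold Nat.odd; rewrite E; reflexivity). rewrite H in D. simpl in D.
    unfold zenc. destruct (Z.leb_spec 0 (Z.of_nat (Nat.div2 k))); lia.
  - assert (Nat.odd k = true) by (unfold Nat.odd; rewrite E; reflexivity). rewrite H in D. simpl in D.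
    unfold zenc. destruct (Z.leb_spec 0 (- Z.of_nat (Nat.div2 k) - 1)); lia.
Qed.

Definition dec (k : nat) : Z * Z := let (u, v) := Cantor.of_nat k in (zdec u, zdec v).
Definition enc (m : Z * Z) : nat := Cantor.to_nat (zenc (fst m), zenc (snd m)).

Lemma dec_enc m : dec (enc m) = m.
Proof. unfold dec, enc. rewrite Cantor.cancel_of_to. rewrite !zdec_zenc. destruct m; reflexivity. Qed.

Lemma enc_dec k : enc (dec k) = k.
Proof.
  unfold dec, enc. destruct (Cantor.of_nat k) as [u v] eqn:E. cbn [fst snd]. rewrite !zenc_zdec.
  rewrite <- E. apply Cantor.cancel_to_of.
Qed.

Lemma dec_inj k1 k2 : dec k1 = dec k2 -> k1 = k2.
Proof. intro H. rewrite <- (enc_dec k1), <- (enc_dec k2), H. reflexivity. Qed.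

Definition eqZZ (m c : Z * Z) : {m = c} + {m <> c}.
Proof. decide equality; apply Z.eq_dec. Defined.

Definition upd (f : config) (c : Z * Z) (t : tile) : config := fun m => if eqZZ m c then t else f m.

Section Kon.
Variable n : Z.
Hypothesis Hn : 1 <= n.

Definition agree (z f : config) (K : nat) := forall k, (k < K)%nat -> z (dec k) = f (dec k).
Definition good (f : config) (K : nat) := forall M, 0 <= M -> exists z, boxC n z M /\ agree z f K.

Lemma boxC_mono z M M' : boxC n z M -> M' <= M -> boxC n z M'.
Proof.
  intros (A&B&C) H. split; [|split].
  - intros; apply A; lia.
  - intros; apply B; lia.
  - intros; apply C; lia.
Qed.

Lemma list_max (L : list tile) (Q : tile -> Z -> Prop) :
  (forall t M M', Q t M -> M <= M' -> Q t M') ->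
  (forall t, In t L -> exists M, 0 <= M /\ Q t M) -> exists M, 0 <= M /\ forall t, In t L -> Q t M.
Proof.
  intros Hm. induction L as [|t L IH]; intro H.
  - exists 0. split; [lia|]. intros t [].
  - destruct (H t (or_introl eq_refl)) as (M1&H1&Q1).
    destruct IH as (M2&H2&Q2). { intros; apply H; right; auto. }
    exists (Z.max M1 M2). split; [lia|]. intros t' [<-|Ht'].
    + apply (Hm _ M1); auto; lia.
    + apply (Hm _ M2); auto; lia.
Qed.

Lemma good_step f K : good f K -> exists t, good (upd f (dec K) t) (S K).
Proof.
  intro G. apply NNPP. intro Hno.
  set (Q := fun t M => forall z, boxC n z M -> ~ agree z (upd f (dec K) t) (S K)).
  assert (HQ : forall t, In t (Ltiles n) -> exists M, 0 <= M /\ Q t M).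
  { intros t _. apply NNPP. intro H1. apply Hno. exists t. intros M HM. apply NNPP. intro H2.
    apply H1. exists M. split; auto. intros z Hz Ha. apply H2. exists z. auto. }
  destruct (list_max (Ltiles n) Q) as (M&HM&QM).
  { intros t M M' Ht HMM z Hz. apply Ht. apply (boxC_mono z M'); auto. }
  { exact HQ. }
  set (M' := Z.max M (Z.max (Z.abs (fst (dec K))) (Z.abs (snd (dec K))))).
  destruct (G M' ltac:(unfold M'; lia)) as (z&Hz&Ha).
  assert (Hin : in_T n (z (dec K))).
  { destruct (dec K) as [i j] eqn:E. apply (proj1 Hz); unfold M'; try rewrite E; simpl; lia. }
  apply (QM (z (dec K)) (Ltiles_in n Hn _ Hin) z).
  - apply (boxC_mono z M'); auto. unfold M'; lia.
  - intros k Hk. unfold upd. destruct (eqZZ (dec k) (dec K)) as [E|E].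
    + rewrite E. reflexivity.
    + apply Ha. assert (k <> K) by (intro; subst; auto). lia.
Qed.

Definition f0 : config := fun _ => junction n 0 0 0 0.

Lemma good0 : good f0 0.
Proof. intros M HM. destruct (patches n Hn M HM) as (z&Hz). exists z. split; auto. intros k Hk. lia. Qed.

Fixpoint seqF (K : nat) : {f : config | good f K} :=
  match K with
  | O => exist _ f0 good0
  | S K' => let (f, H) := seqF K' in
            let (t, H') := constructive_indefinite_description _ (good_step f K' H) in
            exist _ (upd f (dec K') t) H'
  end.

Definition FF (K : nat) : config := proj1_sig (seqF K).

Lemma FF_good K : good (FF K) K.
Proof. unfold FF. destruct (seqF K); auto. Qed.

Lemma FF_succ K m : m <> dec K -> FF (S K) m = FF K m.
Proof.
  intro H. unfold FF. simpl. destruct (seqF K) as [f Hf]. simpl.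
  destruct (constructive_indefinite_description _ _) as [t Ht]. simpl. unfold upd.
  destruct (eqZZ m (dec K)); [contradiction|reflexivity].
Qed.

Lemma FF_stable k K d : (k < K)%nat -> FF (K + d) (dec k) = FF K (dec k).
Proof.
  intro H. induction d.
  - rewrite Nat.add_0_r. reflexivity.
  - rewrite Nat.add_succ_r. rewrite FF_succ; auto. intro E. apply dec_inj in E. lia.
Qed.

Definition xlim : config := fun m => FF (S (enc m)) m.

Lemma xlim_FF m K : (enc m < K)%nat -> xlim m = FF K m.
Proof.
  intro H. unfold xlim. assert (A := FF_stable (enc m) (S (enc m)) (K - S (enc m))%nat ltac:(lia)).
  rewrite dec_enc in A. replace (S (enc m) + (K - S (enc m)))%nat with K in A by lia. symmetry. exact A.
Qed.

Lemma xlim_valid : valid n xlim.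
Proof.
  split.
  - intro m. destruct (FF_good (S (enc m)) (Z.max (Z.abs (fst m)) (Z.abs (snd m))) ltac:(lia)) as (z&Hz&Ha).
    specialize (Ha (enc m) ltac:(lia)). rewrite dec_enc in Ha. unfold xlim. rewrite <- Ha.
    destruct m as [i j]. apply (proj1 Hz); simpl; lia.
  - intros i j. set (m := (i, j)). set (m' := (i + 1, j)). set (m'' := (i, j + 1)).
    set (K := S (Nat.max (enc m) (Nat.max (enc m') (enc m'')))).
    rewrite (xlim_FF m K), (xlim_FF m' K), (xlim_FF m'' K) by (unfold K; lia).
    destruct (FF_good K (Z.abs i + Z.abs j + 1) ltac:(lia)) as (z&Hz&Ha).
    assert (A1 := Ha (enc m) ltac:(unfold K; lia)). assert (A2 := Ha (enc m') ltac:(unfold K; lia)).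
    assert (A3 := Ha (enc m'') ltac:(unfold K; lia)). rewrite dec_enc in A1, A2, A3.
    rewrite <- A1, <- A2, <- A3. unfold m, m', m''. destruct Hz as (_&B&C). split.
    + apply B; lia.
    + apply C; lia.
Qed.

End Kon.

Theorem exists_valid n : 1 <= n -> exists x, valid n x.
Proof. intro Hn. exists (xlim n Hn). apply xlim_valid. Qed.


Theorem corollaryB : forall n : Z, 1 <= n -> aperiodic n.
Proof.
  intros n Hn. split.
  - apply exists_valid; auto.
  - apply aperiodic_part; auto.
Qed.
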